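(* Let $S$ be a numerical semigroup with minimal generators $e<a_1<\dots<a_t$. Then ${\rm d}_{\max}(S)=\max_{0\le i<e,\ u\in{\rm adj}(S_i)}|\mathcal R(u)|$.
   Context: A numerical semigroup is a submonoid of $(\mathbb N,+)$ with finite complement in $\mathbb N$, with minimal generators $e<a_1<\dots<a_t$. An $S$-factorization of $n\in S$ is a tuple $(c_0,\dots,c_t)\in\mathbb N^{t+1}$ with $c_0e+\sum c_ia_i=n$; its length is $\sum c_i$. ${\rm ord}(n;S)$ is the maximum length of an $S$-factorization of $n$, and ${\rm d}_{\max}(n;S)$ is the number of $S$-factorizations of $n$ of length ${\rm ord}(n;S)$. We set ${\rm d}_{\max}(S)=\max_{n\in S}{\rm d}_{\max}(n;S)$. Let $d_i=a_i-e$, $B=\langle e,d_1,\dots,d_t\rangle$ (the blowup) and $\mathcal D=(e,d_1,\dots,d_t)$. A $B^{\mathcal D}$-factorization of $b\in B$ is a tuple $(x_0,\dots,x_t)\in\mathbb N^{t+1}$ with $x_0e+\sum x_id_i=b$, with length $\sum x_i$. $\min{\rm ord}(b;B^{\mathcal D})$ is the minimum length of such a factorization, and $\mathcal P(b)$ is the set of all of them. For $s\in S$ put ${\rm adj}(s)=s-{\rm ord}(s;S)e$, and $S_i=\{s\in S:s\equiv i\pmod e\}$. For fixed $i$ write ${\rm adj}(S_i)=\{{\rm adj}(s):s\in S_i\}=\{u_0<u_1<\cdots\}$. Define $\mathcal R(u_0)=\mathcal P(u_0)$ and, for $j>0$, $\mathcal R(u_j)=\{\mathbf x\in\mathcal P(u_j):|\mathbf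 x|<\min{\rm ord}(u_{j-1};B^{\mathcal D})-\frac{u_j-u_{j-1}}{e}\}$. *)

(* Defs.v *)
From mathcomp Require Import all_boot all_order all_algebra.
From mathcomp Require Import boolp.
Set Implicit Arguments. Unset Strict Implicit. Unset Printing Implicit Defensive.
Import Order.TTheory GRing.Theory Num.Theory.

Definition wsum (g c : seq nat) : nat := sumn [seq x.1 * x.2 | x <- zip c g].

Definition inS (g : seq nat) (n : nat) : Prop :=
  exists c : seq nat, size c = size g /\ wsum g c = n.

Fixpoint tuples (k n : nat) : seq (seq nat) :=
  match k with
  | 0 => [:: [::]]
  | k'.+1 => [seq x :: s | x <- iota 0 n.+1, s <- tuples k' n]
  end.

(* Since all weights used below are positive, every coordinate of a
   factorization of n is at most n, so this enumerates ALL factorizations. *)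
Definition facts (g : seq nat) (n : nat) : seq (seq nat) :=
  [seq c <- tuples (size g) n | wsum g c == n].

Section NS.
Variables (e : nat) (a : seq nat).

Definition gensS : seq nat := e :: a.
(* the tuple D = (e, a_1 - e, ..., a_t - e) generating the blowup B *)
Definition gensD : seq nat := e :: [seq x - e | x <- a].

Definition ordS (n : nat) : nat := \max_(c <- facts gensS n) sumn c.
Definition dmaxn (n : nat) : nat :=
  count (fun c => sumn c == ordS n) (facts gensS n).
Definition adj (s : nat) : nat := s - ordS s * e.
Definition inAdj (i u : nat) : Prop :=
  exists s, inS gensS s /\ s %% e = i /\ adj s = u.
Definition minordB (b : nat) : nat :=
  let lens := [seq sumn x | x <- facts gensD b] in foldr minn (head 0 lens) lens.
Definition Pset (b : nat) : seq (seq nat) := facts gensD b.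
(* membership of x in R(u), u \in adj(S_i):
   either u = u_0 is the least element of adj(S_i), or
   v = u_{j-1} is the predecessor of u in adj(S_i) and
   |x| < min ord(v; B^D) - (u - v)/e. *)
Definition inR (i u : nat) (x : seq nat) : bool :=
  `[< (forall w, inAdj i w -> u <= w) \/
      exists v, [/\ inAdj i v, v < u,
                 (forall w, inAdj i w -> v < w -> u <= w) &
                 ((sumn x)%:R < (minordB v)%:R - ((u%:R - v%:R) / e%:R) :> rat)%R] >].
Definition Rcard (i u : nat) : nat := count (inR i u) (Pset u).
End NS.

Definition minimal_gens (g : seq nat) : Prop :=
  forall j, j < size g -> ~ inS (take j g ++ drop j.+1 g) (nth 0 g j).

Definition finite_complement (g : seq nat) : Prop :=
  exists N, forall n, N <= n -> inS g n.

(* Main.v *)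
Require Import Defs.
From mathcomp Require Import all_boot all_order all_algebra.
From mathcomp Require Import boolp.
From mathcomp Require Import zify.
Set Implicit Arguments. Unset Strict Implicit. Unset Printing Implicit Defensive.
Import Order.TTheory GRing.Theory Num.Theory.

Lemma mem_tuples k n c :
  (c \in tuples k n) = (size c == k) && all (fun x => x <= n) c.
Proof.
elim: k c => [|k IH] c.
  by rewrite /= inE; case: c.
have AP := (@allpairsP nat (seq nat) (seq nat) (fun x s => x :: s) (iota 0 n.+1) (tuples k n) c).
rewrite [tuples _ _]/=.
apply/AP/idP.
  case=> [[x s] [Hx Hs ->]].
  move: Hx Hs; rewrite mem_iota IH /= eqSS => Hx /andP [-> ->]; rewrite andbT.
  by lia.
case: c AP => [|x s] // _; rewrite /= eqSS => /and3P [Hs Hx Ha].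
exists (x, s); split; [rewrite /= inE mem_iota; lia | rewrite /= IH Hs // | by []].
Qed.

Lemma uniq_tuples k n : uniq (tuples k n).
Proof.
elim: k => [|k IH] //.
have -> : tuples k.+1 n = [seq x :: s | x <- iota 0 n.+1, s <- tuples k n] by [].
apply: (@allpairs_uniq nat (seq nat) (seq nat) (fun x s => x :: s)) => //; first exact: iota_uniq.
by move=> [x1 s1] [x2 s2] _ _ /= [-> ->].
Qed.

Lemma wsum_cons g0 g c0 c : wsum (g0 :: g) (c0 :: c) = c0 * g0 + wsum g c.
Proof. by []. Qed.

Lemma wsum_ge g c : all (fun x => 0 < x) g -> size c = size g ->
  all (fun x => x <= wsum g c) c /\ sumn c <= wsum g c.
Proof.
elim: g c => [|g0 g IH] [|c0 c] //= /andP [Hg0 Hg] [Hs].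
have [H1 H2] := IH c Hg Hs.
rewrite wsum_cons; split; last by nia.
apply/andP; split; first by nia.
by apply/allP => x Hx; move/allP: H1 => /(_ x Hx); lia.
Qed.

Lemma mem_facts g n c : all (fun x => 0 < x) g ->
  (c \in facts g n) = (size c == size g) && (wsum g c == n).
Proof.
move=> Hg; rewrite mem_filter mem_tuples.
apply/idP/idP.
  by case/and3P => -> -> _.
case/andP => /eqP Hs /eqP Hw; rewrite Hw eqxx Hs eqxx /=.
by have [H _] := wsum_ge Hg Hs; rewrite -Hw.
Qed.

Lemma uniq_facts g n : uniq (facts g n).
Proof. exact/filter_uniq/uniq_tuples. Qed.

Lemma bigmax_seq_ex (T : eqType) (l : seq T) (F : T -> nat) :
  l != [::] -> exists2 x, x \in l & \max_(y <- l) F y = F x.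
Proof.
elim: l => [|x l IH] //= _.
rewrite big_cons.
case: l IH => [|y l] IH.
  by exists x; rewrite ?inE // big_nil maxn0.
have [z Hz ->] := IH isT.
case: (leqP (F x) (F z)) => H.
  by exists z; [rewrite in_cons Hz orbT | lia].
by exists x; [rewrite in_cons eqxx | lia].
Qed.

Lemma foldr_min_le (l : seq nat) h x : x \in l -> foldr minn h l <= x.
Proof.
elim: l => [|y l IH] //=; rewrite inE => /orP [/eqP ->|H].
  exact: geq_minl.
by rewrite geq_min IH ?orbT.
Qed.

Lemma foldr_min_in0 (l : seq nat) h : foldr minn h l \in h :: l.
Proof.
elim: l => [|z l IH] /=; first by rewrite inE eqxx.
rewrite !inE in IH *.
rewrite /minn; case: ifP => _; first by rewrite eqxx !orbT.
by case/orP: IH => ->; rewrite ?orbT.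
Qed.

Lemma foldr_min_in (l : seq nat) : l != [::] -> foldr minn (head 0 l) l \in l.
Proof.
case: l => [|y l] // _.
have := foldr_min_in0 (y :: l) y.
by rewrite inE => /orP [/eqP ->|]; rewrite ?inE ?eqxx.
Qed.

Section Main.
Variables (e : nat) (a : seq nat).
Hypothesis He : 0 < e.
Hypothesis Ha : all (fun x => e < x) a.

Local Notation wD := (wsum [seq x - e | x <- a]).
Local Notation gS := (gensS e a).
Local Notation gD := (gensD e a).
Local Notation oS := (Defs.ordS e a).
Local Notation adj := (Defs.adj e a).

Lemma posS : all (fun x => 0 < x) gS.
Proof.
rewrite /gensS /= He /=; apply/allP => x Hx.
by move/allP: Ha => /(_ x Hx); lia.
Qed.

Lemma posD : all (fun x => 0 < x) gD.
Proof.
rewrite /gensD /= He /= all_map; apply/allP => x Hx /=.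
by move/allP: Ha => /(_ x Hx); lia.
Qed.

Lemma wsumA_D y : size y = size a -> wsum a y = wD y + sumn y * e.
Proof.
elim: a Ha y => [|x l IH] /=; first by move=> _ [|].
move=> /andP [Hx Hl] [|y0 y] // [Hs].
rewrite !wsum_cons IH //.
have : e <= x by lia.
move=> H; rewrite /= mulnBr mulnDl; have := leq_mul (leqnn y0) H; lia.
Qed.

Lemma wS c0 y : size y = size a ->
  wsum gS (c0 :: y) = (c0 + sumn y) * e + wD y.
Proof. by move=> Hs; rewrite /gensS wsum_cons wsumA_D //; lia. Qed.

Lemma wDc x0 y : wsum gD (x0 :: y) = x0 * e + wD y.
Proof. by []. Qed.

Lemma inS_facts n : inS gS n <-> exists c, c \in facts gS n.
Proof.
split.
  by case=> c [Hs Hw]; exists c; rewrite mem_facts ?posS // Hs Hw !eqxx.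
by case=> c; rewrite mem_facts ?posS // => /andP [/eqP ? /eqP ?]; exists c.
Qed.


Lemma ord_ge n c : c \in facts gS n -> sumn c <= oS n.
Proof. move=> H; exact: (@leq_bigmax_seq _ _ xpredT sumn _ H isT). Qed.

Lemma ord_ex n : inS gS n -> exists y,
  [/\ size y = size a, wD y + oS n * e = n & sumn y <= oS n].
Proof.
move=> /inS_facts [c Hc].
have Hne : facts gS n != [::] by apply/eqP => E; move: Hc; rewrite E.
have [c' Hc' Hm] := bigmax_seq_ex sumn Hne.
move: Hc'; rewrite mem_facts ?posS //.
case: c' Hm => [|c0 y] // Hm /andP [Hs /eqP Hw].
have Hs' : size y = size a by move/eqP: Hs => /= [].
rewrite /Defs.ordS Hm /=; exists y; split => //; last by lia.
by rewrite -Hw wS //; lia.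
Qed.

Lemma ord_ub n L y : size y = size a -> wD y + L * e = n -> sumn y <= L ->
  inS gS n /\ L <= oS n.
Proof.
move=> Hs Hw Hl.
have Hc : (L - sumn y) :: y \in facts gS n.
  by rewrite mem_facts ?posS //= Hs eqxx wS // -Hw; apply/eqP; rewrite subnK //; lia.
split; first by apply/inS_facts; exists ((L - sumn y) :: y).
by have := ord_ge Hc; rewrite /=; lia.
Qed.

Lemma adjE n : inS gS n -> adj n + oS n * e = n.
Proof.
move=> /ord_ex [y [Hs Hw Hl]]; rewrite /Defs.adj subnK //; lia.
Qed.

Lemma adj_mod n : inS gS n -> adj n %% e = n %% e.
Proof. by move=> H; rewrite -{2}(adjE H) addnC modnMDl. Qed.

Lemma adj_fact n : inS gS n -> exists y,
  [/\ 0 :: y \in facts gD (adj n), sumn y <= oS n & size y = size a].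
Proof.
move=> H; have [y [Hs Hw Hl]] := ord_ex H.
exists y; split => //.
rewrite mem_facts ?posD //= size_map Hs eqxx wDc /=.
by apply/eqP; have := adjE H; lia.
Qed.

Lemma adj_step n : inS gS n ->
  [/\ inS gS (n + e), oS n + 1 <= oS (n + e) & adj (n + e) <= adj n].
Proof.
move=> H; have [y [Hs Hw Hl]] := ord_ex H.
have [H1 H2] := ord_ub (L := oS n + 1) (n := n + e) Hs
  ltac:(rewrite mulnDl mul1n; lia) ltac:(lia).
split => //.
have := adjE H; have := adjE H1.
have := leq_mul H2 (leqnn e); rewrite mulnDl mul1n; lia.
Qed.

Lemma adj_mono n j : inS gS n ->
  [/\ inS gS (n + j * e), oS n + j <= oS (n + j * e) & adj (n + j * e) <= adj n].
Proof.
move=> H; elim: j => [|j [I1 I2 I3]]; first by rewrite !addn0.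
have [J1 J2 J3] := adj_step I1.
have E : n + j * e + e = n + j.+1 * e by rewrite mulSn; lia.
rewrite E in J1 J2 J3; split => //; lia.
Qed.

Lemma adj_mono' s1 s2 : inS gS s1 -> s1 <= s2 -> s1 %% e = s2 %% e ->
  inS gS s2 /\ adj s2 <= adj s1.
Proof.
move=> H1 Hle Hm.
have Hd : e %| s2 - s1 by rewrite -eqn_mod_dvd // Hm.
have E : s2 = s1 + (s2 - s1) %/ e * e by rewrite divnK //; lia.
have [J1 _ J3] := adj_mono ((s2 - s1) %/ e) H1.
by rewrite -E in J1 J3.
Qed.

Lemma key_L s v x k : inS gS s -> x \in facts gD v -> v + k * e = adj s -> 0 < k ->
  oS s + k < sumn x.
Proof.
move=> Hs Hx Hv Hk; rewrite ltnNge; apply/negP => Hle.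
move: Hx; rewrite mem_facts ?posD //.
case: x Hle => [|x0 y] //= Hle /andP [Hsz /eqP Hw].
have Hsz' : size y = size a by move/eqP: Hsz => [] ; rewrite size_map.
have [_ H] := ord_ub (L := x0 + oS s + k) (n := s) Hsz'
  ltac:(have := adjE Hs; rewrite wDc in Hw; rewrite !mulnDl; lia) ltac:(lia).
lia.
Qed.

Lemma adj_bound N : (forall n, N <= n -> inS gS n) ->
  forall s, inS gS s -> adj s <= N + e.
Proof.
move=> HN s; elim: s {-2}s (leqnn s) => [|b IH] s Hsb Hs.
  by rewrite /Defs.adj; lia.
case: (ltnP s (N + e)) => H; first by rewrite /Defs.adj; lia.
have Hs' : inS gS (s - e) by apply: HN; lia.
have [_ _ H3] := adj_step Hs'.
rewrite subnK in H3; last by lia.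
apply: leq_trans H3 _; apply: IH => //; lia.
Qed.


Lemma count_inj (P1 P2 : pred (seq nat)) (l1 l2 : seq (seq nat)) (f : seq nat -> seq nat) :
  uniq l1 -> {in [seq x <- l1 | P1 x] &, injective f} ->
  (forall x, x \in l1 -> P1 x -> f x \in l2 /\ P2 (f x)) ->
  count P1 l1 <= count P2 l2.
Proof.
move=> Hu Hinj Hf; rewrite -!size_filter -(size_map f).
apply: uniq_leq_size; first by rewrite map_inj_in_uniq // filter_uniq.
move=> y /mapP [x]; rewrite mem_filter => /andP [H1 H2] ->.
by have [H3 H4] := Hf x H2 H1; rewrite mem_filter H3 H4.
Qed.

Local Open Scope ring_scope.
Lemma ratE n m u v k : u = v + k * e ->
  ((n%:R : rat) < m%:R - (u%:R - v%:R) / e%:R)%R = (n + k < m)%N.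
Proof.
move=> ->.
have He' : (e%:R : rat) != 0%R.
  by rewrite pnatr_eq0 -lt0n.
rewrite natrD natrM (addrC (v%:R)%R) addrK mulfK // ltrBrDr.
by rewrite -natrD ltr_nat.
Qed.

Local Close Scope ring_scope.
Lemma inAdj_mod i w : inAdj e a i w -> w %% e = i.
Proof. by case=> s [Hs [Hm <-]]; rewrite adj_mod. Qed.

Lemma diff_k i u v : inAdj e a i u -> inAdj e a i v -> v < u ->
  exists2 k, 0 < k & u = v + k * e.
Proof.
move=> Hu Hv Hlt.
have Hd : e %| u - v by rewrite -eqn_mod_dvd ?(inAdj_mod Hu) ?(inAdj_mod Hv) //; lia.
exists ((u - v) %/ e); last by rewrite divnK //; lia.
rewrite divn_gt0 //; apply: dvdn_leq => //; lia.
Qed.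

Lemma minord_ex v : (exists y, 0 :: y \in facts gD v) ->
  exists2 x, x \in facts gD v & minordB e a v = sumn x.
Proof.
case=> y Hy.
have Hne : [seq sumn x | x <- facts gD v] != [::].
  by apply/eqP => E; have := map_f sumn Hy; rewrite E.
have := foldr_min_in Hne; rewrite /minordB /Pset => /mapP [x Hx E].
by exists x.
Qed.

Lemma minord_le v x : x \in facts gD v -> minordB e a v <= sumn x.
Proof. by move=> H; rewrite /minordB; apply: foldr_min_le; apply: map_f. Qed.

Lemma pred_ex i u : ~ (forall w, inAdj e a i w -> u <= w) ->
  exists v, [/\ inAdj e a i v, v < u & forall w, inAdj e a i w -> v < w -> u <= w].
Proof.
move=> /existsPNP [w Hw Hlt].
pose P := fun w => `[< inAdj e a i w >] && (w < u).
have exP : exists w, P w by exists w; rewrite /P; apply/andP; split; [apply/asboolP|lia].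
have ubP : forall w, P w -> w <= u by move=> w' /andP [_ H]; lia.
case: (ex_maxnP exP ubP) => v /andP [/asboolP Hv Hvu] Hmax.
exists v; split => // w' Hw' Hvw; rewrite leqNgt; apply/negP => H.
have : P w' by apply/andP; split => //; apply/asboolP.
by move/Hmax; lia.
Qed.

Lemma inR_of s x : inS gS s -> sumn x <= oS s ->
  inR e a (s %% e) (adj s) x.
Proof.
move=> Hs Hx; apply/asboolP.
have HuA : inAdj e a (s %% e) (adj s) by exists s; split => //; split.
case: (pselect (forall w, inAdj e a (s %% e) w -> adj s <= w)) => Hmin; first by left.
right; have [v [Hv Hvu Hp]] := pred_ex Hmin.
exists v; split => //.
have [k Hk Euv] := diff_k HuA Hv Hvu.
rewrite (ratE _ _ Euv).
have [sv [Hsv [_ Hadv]]] := Hv.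
have [y [Hy _ _]] := adj_fact Hsv.
rewrite Hadv in Hy.
have [x' Hx' ->] := minord_ex (ex_intro _ y Hy).
have := key_L Hs Hx' (esym Euv) Hk; lia.
Qed.

Lemma part1 s : inS gS s -> dmaxn e a s <= Rcard e a (s %% e) (adj s).
Proof.
move=> Hs; rewrite /dmaxn /Rcard /Pset.
apply: (count_inj (f := fun c => 0 :: behead c)) => //.
- exact: uniq_facts.
- move=> c1 c2; rewrite !mem_filter !mem_tuples.
  move=> /and3P [/eqP E1 _ /andP [/eqP S1 _]] /and3P [/eqP E2 _ /andP [/eqP S2 _]] E.
  case: c1 E E1 S1 => [|x1 y1] //; case: c2 E2 S2 => [|x2 y2] // E2 S2 [E] E1 S1.
  subst y2; simpl in *; have -> : x1 = x2 by lia.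
  by [].
move=> c; rewrite mem_facts ?posS //; case: c => [|c0 y] //= /andP [Hsz /eqP Hw] /eqP Ho.
have Hsz' : size y = size a by move/eqP: Hsz => [].
split; last by apply: inR_of => //; rewrite /=; lia.
rewrite mem_facts ?posD //= size_map Hsz' eqxx wDc /=.
rewrite wS // in Hw; apply/eqP; have := adjE Hs; rewrite Ho in Hw; lia.
Qed.

Lemma part2_gen s' u (P : pred (seq nat)) : inS gS s' -> adj s' = u ->
  (forall x, x \in facts gD u -> P x -> sumn x <= oS s') ->
  count P (facts gD u) <= dmaxn e a s'.
Proof.
move=> Hs Hu HP.
have X0 : forall x, x \in facts gD u -> P x ->
    exists y, [/\ x = 0 :: y, size y = size a, wD y = u & sumn y <= oS s'].
  move=> x Hx Px; have Hle := HP x Hx Px; move: Hx.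
  rewrite mem_facts ?posD //; case: x Px Hle => [|x0 y] //= Px Hle /andP [Hsz /eqP Hw].
  have Hsz' : size y = size a by move/eqP: Hsz; rewrite size_map => [[]].
  have [_ H] := ord_ub (L := x0 + oS s') (n := s') Hsz'
    ltac:(have := adjE Hs; rewrite wDc in Hw; rewrite mulnDl; lia) ltac:(lia).
  have Ex0 : x0 = 0 by lia.
  by subst x0; exists y; split => //; rewrite wDc in Hw; lia.
rewrite /dmaxn.
apply: (count_inj (f := fun x => (oS s' - sumn (behead x)) :: behead x)).
- exact: uniq_facts.
- move=> x1 x2; rewrite !(@mem_filter _ P) => /andP [P1 H1] /andP [P2 H2] [_ E].
  move: E; have [y1 [-> _ _ _]] := X0 x1 H1 P1; have [y2 [-> _ _ _]] := X0 x2 H2 P2.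
  by move=> /= ->.
move=> x Hx Px; have [y [-> Hsz Hw Hl]] := X0 x Hx Px.
rewrite /= mem_facts ?posS //= Hsz eqxx wS //; split.
  by apply/eqP; have := adjE Hs; rewrite subnK //; lia.
by apply/eqP; rewrite subnK.
Qed.

Lemma part2 i u : inAdj e a i u -> exists n, inS gS n /\ Rcard e a i u <= dmaxn e a n.
Proof.
move=> HuA; have [s [Hs [Hmi Hu]]] := HuA.
rewrite /Rcard /Pset.
case: (pselect (forall w, inAdj e a i w -> u <= w)) => Hmin.
  have [J1 J2 J3] := adj_mono u Hs.
  have Hw : inAdj e a i (adj (s + u * e)).
    by exists (s + u * e); split => //; split => //; rewrite addnC modnMDl.
  have Hadj : adj (s + u * e) = u by have := Hmin _ Hw; lia.
  exists (s + u * e); split => //.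
  apply: part2_gen => // x Hx _.
  move: Hx; rewrite mem_facts ?posD // => /andP [/eqP Hsz /eqP Hwx].
  have [_ H] := wsum_ge posD Hsz; lia.
have [v [Hv Hvu Hp]] := pred_ex Hmin.
have [sv [Hsv [Hmv Hav]]] := Hv.
have Hlt : s < sv.
  rewrite ltnNge; apply/negP => Hle.
  have [_ H] := adj_mono' Hsv Hle ltac:(by rewrite Hmv Hmi).
  by move: H; rewrite Hu Hav; lia.
have Hd : e %| sv - s by rewrite -eqn_mod_dvd ?Hmv ?Hmi //; lia.
set J := (sv - s) %/ e.
have EJ : sv = s + J * e by rewrite /J divnK //; lia.
have J1 : 0 < J by move: EJ Hlt; case: (J) => //; lia.
pose Pj := fun j => adj (s + j.+1 * e) != u.
have exP : exists j, Pj j.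
  exists J.-1; rewrite /Pj prednK // -EJ Hav; lia.
case: (ex_minnP exP) => j Pjj Hjmin.
have Ha' : adj (s + j * e) = u.
  case: j Pjj Hjmin => [|j] Pjj Hjmin /=; first by rewrite mul0n addn0.
  apply/eqP; apply: contraT => H; have := Hjmin j H; lia.
have [I1 _ _] := adj_mono j Hs.
set s' := s + j * e in Ha' I1 *.
have E1 : s' + e = s + j.+1 * e by rewrite /s' mulSn; lia.
have [K1 K2 K3] := adj_step I1.
have Hwv : adj (s' + e) = v.
  have Hw : inAdj e a i (adj (s' + e)).
    exists (s' + e); split => //; split => //.
    by rewrite E1 addnC modnMDl.
  apply/eqP; rewrite eqn_leq; apply/andP; split.
    rewrite leqNgt; apply/negP => H; have := Hp _ Hw H.
    by move: Pjj; rewrite /Pj -E1; move: K3; rewrite Ha'; lia.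
  have Hjl : j.+1 <= J by have := Hjmin J.-1; rewrite /Pj prednK // -EJ Hav; lia.
  have [_ _ L3] := adj_mono (J - j.+1) K1.
  have E2 : s' + e + (J - j.+1) * e = sv by rewrite E1 EJ -addnA -mulnDl subnKC.
  by rewrite E2 Hav in L3.
have [k Hk Euv] := diff_k HuA Hv Hvu.
have Hq : oS (s' + e) = k + oS s' + 1.
  have A1 := adjE I1; have A2 := adjE K1; rewrite Ha' in A1; rewrite Hwv in A2.
  have : (k + oS s' + 1) * e = oS (s' + e) * e by rewrite !mulnDl; lia.
  by move/eqP; rewrite eqn_pmul2r // => /eqP.
have Hmq : minordB e a v <= oS (s' + e).
  have [y [Hy Hly _]] := adj_fact K1; rewrite Hwv in Hy.
  by have := minord_le Hy; rewrite /=; lia.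
exists s'; split => //.
apply: part2_gen => // x Hx /asboolP [H|[v' [Hv' Hv'u Hp' Hr]]]; first by case: Hmin.
have Evv : v' = v.
  apply/eqP; rewrite eqn_leq; apply/andP; split.
    by rewrite leqNgt; apply/negP => H; have := Hp _ Hv' H; lia.
  by rewrite leqNgt; apply/negP => H; have := Hp' _ Hv H; lia.
subst v'; rewrite (ratE _ _ Euv) in Hr; lia.
Qed.
End Main.

Theorem corollary3p11 (e : nat) (a : seq nat) :
  0 < e ->
  sorted ltn (e :: a) ->
  finite_complement (gensS e a) ->
  minimal_gens (gensS e a) ->
  exists m : nat,
    [/\ (exists n, inS (gensS e a) n /\ dmaxn e a n = m),
        (forall n, inS (gensS e a) n -> dmaxn e a n <= m),
        (exists i u, [/\ i < e, inAdj e a i u & Rcard e a i u = m]) &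
        (forall i u, i < e -> inAdj e a i u -> Rcard e a i u <= m)].
Proof.
move=> He Hsort [N HN] _.
have Ha : all (fun x => e < x) a by exact: (order_path_min ltn_trans Hsort).
pose Bd := \max_(u < (N + e).+1) size (facts (gensD e a) u).
have Hb : forall n, inS (gensS e a) n -> dmaxn e a n <= Bd.
  move=> n Hn; apply: leq_trans (part1 He Ha Hn) _.
  apply: leq_trans (count_size _ _) _.
  have Hu : Defs.adj e a n < (N + e).+1 by rewrite ltnS; exact: adj_bound.
  exact: (leq_bigmax (Ordinal Hu)).
pose P := fun d => `[< exists n, inS (gensS e a) n /\ dmaxn e a n = d >].
have exP : exists d, P d.
  by exists (dmaxn e a N); apply/asboolP; exists N; split => //; apply: HN.
have ubP : forall d, P d -> d <= Bd by move=> d /asboolP [n [Hn <-]]; exact: Hb.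
case: (ex_maxnP exP ubP) => m /asboolP [n0 [Hn0 Hm0]] Hmax.
have Hall : forall n, inS (gensS e a) n -> dmaxn e a n <= m.
  by move=> n Hn; apply: Hmax; apply/asboolP; exists n.
have HR : forall i u, inAdj e a i u -> Rcard e a i u <= m.
  move=> i u Hiu; have [n [Hn H]] := part2 He Ha Hiu.
  exact: leq_trans H (Hall n Hn).
exists m; split => //.
- by exists n0.
- exists (n0 %% e), (Defs.adj e a n0); split.
  + by rewrite ltn_mod.
  + by exists n0; split => //; split.
  + apply/eqP; rewrite eqn_leq HR ?andbT; last by exists n0; split => //; split.
    by rewrite -Hm0; exact: part1.
- by move=> i u _; exact: HR.
Qed.
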